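(* Let $A=\{a_1,\dots,a_{3k}\}$ be an instance of 3-PARTITION with $a^2$ divisible by $7$, and let $G(A)$ be the bipartite network constructed from $A$ as described in the context. In any division of $G(A)$ with maximal bipartite modularity, none of the stars $X_1,\dots,X_{3k}$ and $Y_1,\dots,Y_{3k}$ is divided (i.e., all vertices of each star lie in a single community).
   Context: An instance of 3-PARTITION is a set of $3k$ positive integers $A=\{a_1,\dots,a_{3k}\}$ such that $a=\sum_{i=1}^{3k}a_i=kb$ and $b/4<a_i<b/2$ for all $i$, for some integer $b$. The bipartite network $G(A)$ (vertices colored red/blue, every edge joining a red and a blue vertex) is built as follows. (1) Construct $k$ complete bipartite networks (bicliques) $K_1,\dots,K_k$, each with $a$ red and $a$ blue vertices. (2) For each $i=1,\dots,3k$ add a red vertex $x_i$ and a blue vertex $y_i$ (element vertices). (3) For each $i$, connect $x_i$ to $a_i$ blue vertices in each of the $k$ bicliques, in such a way that each blue vertex of every biclique is adjacent to exactly one red element vertex; similarly connect $y_i$ to $a_i$ red vertices in each biclique so that each red vertex of every biclique is adjacent to exactly one blue element vertex. (4) For each $i$, add the edge $x_iy_i$. (5) For each $i$, construct a star $X_i$ with one blue internal vertex and $a^2/7$ red leaves, and a star $Y_i$ with one red internal vertex and $a^2/7$ blue leaves. (6) For each $i$, connect $x_i$ to the internal vertex of $X_i$ and $y_i$ to the internal vertex of $Y_i$. A division of the vertex set is a partition into communities. With $m$ the number of edges, Barber's bipartite modularity is $Q_b(\mathcal{C})=\sum_{C\in\mathcal{C}}\left(\frac{m_C}{m}-\frac{R_CB_C}{m^2}\right)$,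 where $m_C$ is the number of edges inside $C$ and $R_C$ (resp. $B_C$) is the sum of degrees of red (resp. blue) vertices in $C$. A division with maximal bipartite modularity is one maximizing $Q_b$ over all divisions. *)

(* Defs.v *)
From HB Require Import structures.
From mathcomp Require Import all_boot all_order all_algebra.
Set Implicit Arguments. Unset Strict Implicit. Unset Printing Implicit Defensive.
Import Order.TTheory GRing.Theory Num.Theory.

(* A bipartite network is given by a finite set R of red vertices, a   *)
(* finite set B of blue vertices and an edge relation e : R -> B.      *)
(* Its vertex set is R + B (inl = red, inr = blue).                    *)
Section Modularity.
Variables (R B : finType) (e : R -> B -> bool).

Definition nedges : nat := #|[set p : R * B | e p.1 p.2]|.
Definition degR (r : R) : nat := #|[set b : B | e r b]|.
Definition degB (b : B) : nat := #|[set r : R | e r b]|.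

Definition edges_in (C : {set R + B}) : nat :=
  #|[set p : R * B | [&& e p.1 p.2, inl p.1 \in C & inr p.2 \in C]]|.
Definition RC (C : {set R + B}) : nat := \sum_(r : R | inl r \in C) degR r.
Definition BC (C : {set R + B}) : nat := \sum_(b : B | inr b \in C) degB b.

Definition bimodularity (P : {set {set R + B}}) : rat :=
  \sum_(C in P) ((edges_in C)%:R / (nedges)%:R
                 - ((RC C) * (BC C))%:R / ((nedges)%:R ^+ 2))%R.

Definition division (P : {set {set R + B}}) : bool := partition P [set: R + B].

Definition max_division (P : {set {set R + B}}) : Prop :=
  division P /\
  forall P' : {set {set R + B}}, division P' -> (bimodularity P' <= bimodularity P)%R.

End Modularity.

(* Both colour classes have the same shape:                            *)
(*   side = 'I_k * 'I_n      (biclique vertices: (biclique l, index j)) *)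
(*        + 'I_(3k)          (element vertices x_i resp. y_i)           *)
(*        + 'I_(3k) * 'I_s   (star leaves: red leaves of X_i,           *)
(*                            resp. blue leaves of Y_i)                 *)
(*        + 'I_(3k)          (star centres: red centre of Y_i,          *)
(*                            resp. blue centre of X_i)                 *)
(* with n = a (biclique side size) and s = a^2/7 (number of leaves).   *)
Definition side (k n s : nat) : finType :=
  ((('I_k * 'I_n) + 'I_(3 * k)) + ('I_(3 * k) * 'I_s) + 'I_(3 * k))%type.

Definition bq {k n s} (l : 'I_k) (j : 'I_n) : side k n s := inl (inl (inl (l, j))).
Definition elt {k n s} (i : 'I_(3 * k)) : side k n s := inl (inl (inr i)).
Definition leaf {k n s} (i : 'I_(3 * k)) (t : 'I_s) : side k n s := inl (inr (i, t)).
Definition ctr {k n s} (i : 'I_(3 * k)) : side k n s := inr i.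

(* f l j = i : blue vertex j of biclique l is adjacent to x_i;
   g l j = i : red vertex j of biclique l is adjacent to y_i. *)
Definition GA_edge (k n s : nat) (f g : 'I_k -> 'I_n -> 'I_(3 * k))
    (r b : side k n s) : bool :=
  match r, b with
  (* (1) bicliques K_l *)
  | inl (inl (inl (l, _))), inl (inl (inl (l', _))) => l == l'
  (* (3) x_i -- blue biclique vertices *)
  | inl (inl (inr i)), inl (inl (inl (l, j))) => f l j == i
  (* (3) red biclique vertices -- y_i *)
  | inl (inl (inl (l, j))), inl (inl (inr i)) => g l j == i
  (* (4) x_i -- y_i *)
  | inl (inl (inr i)), inl (inl (inr i')) => i == i'
  (* (6) x_i -- centre of X_i *)
  | inl (inl (inr i)), inr i' => i == i'
  (* (5) red leaves of X_i -- centre of X_i *)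
  | inl (inr (i, _)), inr i' => i == i'
  (* (6) centre of Y_i -- y_i *)
  | inr i, inl (inl (inr i')) => i == i'
  (* (5) centre of Y_i -- blue leaves of Y_i *)
  | inr i, inl (inr (i', _)) => i == i'
  | _, _ => false
  end.

Definition asum k (A : 'I_(3 * k) -> nat) : nat := \sum_(i < 3 * k) A i.

Definition three_partition_instance k (b : nat) (A : 'I_(3 * k) -> nat) : Prop :=
  asum A = k * b /\ forall i, [/\ 0 < A i, b < 4 * A i & 2 * A i < b].

(* step (3): each x_i is adjacent to exactly a_i blue vertices of every
   biclique (each blue biclique vertex to exactly one x_i, automatic since f
   is a function); similarly for y_i and g. *)
Definition valid_assignment k n (A : 'I_(3 * k) -> nat)
    (f : 'I_k -> 'I_n -> 'I_(3 * k)) : Prop :=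
  forall (l : 'I_k) (i : 'I_(3 * k)), #|[set j : 'I_n | f l j == i]| = A i.

Definition starX k n s (i : 'I_(3 * k)) : {set side k n s + side k n s} :=
  inr (ctr i) |: [set inl (leaf i t) | t : 'I_s].
Definition starY k n s (i : 'I_(3 * k)) : {set side k n s + side k n s} :=
  inl (ctr i) |: [set inr (leaf i t) | t : 'I_s].

(* Main.v *)
Require Import Defs.
From HB Require Import structures.
From mathcomp Require Import all_boot all_order all_algebra.
From mathcomp Require Import ring lra zify.
From Stdlib Require Import Lia.
Set Implicit Arguments. Unset Strict Implicit. Unset Printing Implicit Defensive.
Import Order.TTheory GRing.Theory Num.Theory.

Lemma arith1 x y z w : (w + y <= x)%N -> (x + z = w)%N -> x = w /\ z = 0%N.
Proof. lia. Qed.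

Section Gen.
Variables (R B : finType) (e : R -> B -> bool).
Local Notation V := (R + B)%type.
Local Notation m := (nedges e).

Definition qq (X : {set V}) : rat :=
  ((edges_in e X)%:R / (m)%:R - ((RC e X) * (BC e X))%:R / ((m)%:R ^+ 2))%R.

Lemma bimodE P : bimodularity e P = (\sum_(X in P) qq X)%R.
Proof. by []. Qed.

Lemma qq0 : qq set0 = 0%R.
Proof.
rewrite /qq /edges_in /RC /BC.
have -> : [set p : R * B | [&& e p.1 p.2, inl p.1 \in (set0 : {set V}) & inr p.2 \in (set0 : {set V})]] = set0.
  by apply/setP => p; rewrite !inE /= !andbF.
rewrite cards0 !big_pred0 ?mul0r ?subrr // => x; by rewrite inE.
Qed.

Lemma dcR (a : pred R) :
  #|[set p : R * B | e p.1 p.2 && a p.1]| = \sum_(r | a r) degR e r.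
Proof.
rewrite -sum1_card.
have -> : \sum_(r | a r) degR e r = \sum_(r | a r) \sum_(b | e r b) 1.
  by apply: eq_bigr => r _; rewrite /degR -sum1_card; apply: eq_bigl => b; rewrite inE.
rewrite pair_big_dep; apply: eq_bigl => p; by rewrite !inE andbC.
Qed.

Lemma dcB (a : pred B) :
  #|[set p : R * B | e p.1 p.2 && a p.2]| = \sum_(b | a b) degB e b.
Proof.
rewrite -sum1_card.
have -> : \sum_(b | a b) degB e b = \sum_(b | a b) \sum_(r | e r b) 1.
  by apply: eq_bigr => b _; rewrite /degB -sum1_card; apply: eq_bigl => r; rewrite inE.
rewrite (exchange_big_dep predT) //= pair_big_dep; apply: eq_bigl => p; rewrite !inE /=; by case: (e _ _); case: (a _).
Qed.

Lemma RCE X : RC e X = #|[set p : R * B | e p.1 p.2 && (inl p.1 \in X)]|.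
Proof. by rewrite (dcR (fun r => inl r \in X)). Qed.
Lemma BCE X : BC e X = #|[set p : R * B | e p.1 p.2 && (inr p.2 \in X)]|.
Proof. by rewrite (dcB (fun b => inr b \in X)). Qed.

Lemma mE : m = \sum_r degR e r.
Proof. rewrite -(dcR predT); apply: eq_card => p; by rewrite !inE /= andbT. Qed.
Lemma mEB : m = \sum_b degB e b.
Proof. rewrite -(dcB predT); apply: eq_card => p; by rewrite !inE /= andbT. Qed.

Lemma RC_split X : (RC e X + RC e (~: X) = m)%N.
Proof.
rewrite mE (bigID (fun r => inl r \in X)) /=; congr (_ + _); apply: eq_bigl => r; by rewrite inE.
Qed.
Lemma BC_split X : (BC e X + BC e (~: X) = m)%N.
Proof.
rewrite mEB (bigID (fun b => inr b \in X)) /=; congr (_ + _); apply: eq_bigl => r; by rewrite inE.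
Qed.

Lemma RC_mono (X Y : {set V}) : X \subset Y -> RC e X <= RC e Y.
Proof.
move=> sXY; rewrite !RCE; apply: subset_leq_card; apply/subsetP => p.
rewrite !inE => /andP[-> h]; exact: (subsetP sXY _ h).
Qed.
Lemma BC_mono (X Y : {set V}) : X \subset Y -> BC e X <= BC e Y.
Proof.
move=> sXY; rewrite !BCE; apply: subset_leq_card; apply/subsetP => p.
rewrite !inE => /andP[-> h]; exact: (subsetP sXY _ h).
Qed.

Lemma edges_leR X : edges_in e X <= RC e X.
Proof.
rewrite RCE; apply: subset_leq_card; apply/subsetP => p.
by rewrite !inE => /and3P[-> -> _].
Qed.
Lemma edges_leB X : edges_in e X <= BC e X.
Proof.
rewrite BCE; apply: subset_leq_card; apply/subsetP => p.
by rewrite !inE => /and3P[-> _ ->].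
Qed.

Definition pre (lab : V -> {set V}) (t : {set V}) : {set V} := [set y | lab y == t].

Lemma sum_lab (lab : V -> {set V}) :
  bimodularity e (preim_partition lab setT) = (\sum_t qq (pre lab t))%R.
Proof.
have -> : preim_partition lab setT = [set pre lab t | t in [set lab x | x in setT]].
  rewrite /preim_partition /equivalence_partition -imset_comp.
  apply: eq_imset => x; apply/setP => y; by rewrite !inE eq_sym.
rewrite bimodE big_imset; last first.
  move=> t1 t2 /imsetP[x _ ->] _ h.
  have : x \in pre lab (lab x) by rewrite inE.
  by rewrite h inE => /eqP.
rewrite [RHS](bigID (fun t => t \in [set lab x | x in setT])) /=.
rewrite [X in (_ + X)%R]big1 ?addr0 //.
move=> t ht; have -> : pre lab t = set0; last exact: qq0.
apply/setP => y; rewrite !inE; apply/negP => /eqP ht'; case/negP: ht.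
by rewrite -ht'; apply: imset_f.
Qed.

Lemma sum_part P : partition P setT ->
  bimodularity e P = (\sum_t qq (pre (pblock P) t))%R.
Proof. by move=> hP; rewrite -{1}(preim_partition_pblock hP) sum_lab. Qed.

Lemma leaf_lemma P v u r0 b0 :
  max_division e P -> (forall b, e v b = (b == u)) -> e r0 b0 -> b0 != u ->
  exists2 C, C \in P & (inl v \in C) && (inr u \in C).
Proof.
move=> [hpart hmax] hv he0 hb0.
have tiP := partition_trivIset hpart.
have cov : cover P = setT := cover_partition hpart.
have incov x : x \in cover P by rewrite cov inE.
set C := pblock P (inl v); set D := pblock P (inr u).
have CP : C \in P := pblock_mem (incov _).
have DP : D \in P := pblock_mem (incov _).
have vC : inl v \in C by rewrite mem_pblock.
have uD : inr u \in D by rewrite mem_pblock.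
case: (eqVneq C D) => [eCD|nCD]; first by exists C => //; rewrite vC eCD uD.
exfalso.
have uC : inr u \notin C.
  by apply/negP => h; move/negP: nCD; apply; apply/eqP; rewrite /D (def_pblock tiP CP h).
have vD : inl v \notin D.
  by apply/negP => h; move/negP: nCD; apply; apply/eqP; rewrite /C (def_pblock tiP DP h).
have mpos : (0 < m)%N.
  rewrite /nedges card_gt0; apply/set0Pn; exists (r0, b0); by rewrite inE.
have degv : degR e v = 1%N.
  rewrite /degR (_ : [set b | e v b] = [set u]) ?cards1 //; apply/setP => b; by rewrite !inE hv.
have duE : degB e u = #|[set p : R * B | e p.1 p.2 && (p.2 == u)]|.
  by rewrite (dcB (pred1 u)) big_pred1_eq.
have du : (degB e u < m)%N.
  rewrite duE; apply: proper_card; apply/properP; split.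
    by apply/subsetP => p; rewrite !inE => /andP[].
  by exists (r0, b0); rewrite !inE ?he0 // (negbTE hb0) andbF.
have E1 : edges_in e (C :\ inl v) = edges_in e C.
  rewrite /edges_in; apply: eq_card => p; rewrite !inE /=.
  case: (eqVneq p.1 v) => [->|ne] /=; last by rewrite ne.
  rewrite hv eqxx /= vC; case: eqP => //= ->; by rewrite (negbTE uC).
have E2 : edges_in e (inl v |: D) = (edges_in e D).+1.
  rewrite /edges_in.
  have -> : [set p : R * B | [&& e p.1 p.2, inl p.1 \in inl v |: D & inr p.2 \in inl v |: D]]
      = (v, u) |: [set p : R * B | [&& e p.1 p.2, inl p.1 \in D & inr p.2 \in D]].
    apply/setP => -[r b]; rewrite !inE /=.
    case: (eqVneq r v) => [->|ne] /=.
      rewrite hv eqxx xpair_eqE eqxx /= (negbTE vD) andbF orbF.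
      by case: (eqVneq b u) => [->|] //; rewrite uD.
    rewrite xpair_eqE (negbTE ne) -[inl r == inl v]/(r == v) (negbTE ne) /=.
    by [].
  by rewrite cardsU1 !inE /= (negbTE vD) andbF.
have R1 : RC e C = (RC e (C :\ inl v)).+1.
  rewrite /RC (bigD1 v) //= degv add1n; congr S; apply: eq_bigl => r.
  by rewrite !inE /= andbC.
have R2 : RC e (inl v |: D) = (RC e D).+1.
  rewrite /RC (bigD1 v) /=; last by rewrite !inE eqxx.
  rewrite degv add1n; congr S; apply: eq_bigl => r; rewrite !inE /=.
  case: (eqVneq r v) => [->|ne] /=; first by rewrite eqxx (negbTE vD).
  by rewrite -[inl r == inl v]/(r == v) (negbTE ne) /= andbT.
have B1 : BC e (C :\ inl v) = BC e C.
  by apply: eq_bigl => b; rewrite !inE.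
have B2 : BC e (inl v |: D) = BC e D.
  by apply: eq_bigl => b; rewrite !inE.
have prepb x : pre (pblock P) (pblock P x) = pblock P x.
  by apply/setP => y; rewrite inE eq_sym eq_pblock.
pose lab' := fun y : V => if y == inl v then D else pblock P y.
have preC' : pre lab' C = C :\ inl v.
  apply/setP => y; rewrite !inE /lab'; case: (eqVneq y (inl v)) => [->|ne] /=.
    by rewrite eq_sym (negbTE nCD).
  by rewrite /C eq_sym eq_pblock.
have preD' : pre lab' D = inl v |: D.
  apply/setP => y; rewrite !inE /lab'; case: (eqVneq y (inl v)) => [->|ne] /=.
    by rewrite !eqxx.
  by rewrite /D eq_sym eq_pblock.
have preO t : t != C -> t != D -> pre lab' t = pre (pblock P) t.
  move=> tC tD; apply/setP => y; rewrite !inE /lab'.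
  case: (eqVneq y (inl v)) => [->|ne] //=.
  by rewrite -/C eq_sym (negbTE tD) eq_sym (negbTE tC).
have Qs : bimodularity e (preim_partition lab' setT) =
    (bimodularity e P + (qq (C :\ inl v) + qq (inl v |: D) - qq C - qq D))%R.
  have hs (F : {set V} -> rat) :
      (\sum_t F t = F C + (F D + \sum_(t | (t != C) && (t != D)) F t))%R.
    by rewrite (bigD1 C) // (bigD1 D) //= eq_sym.
  rewrite sum_lab (sum_part hpart) (hs (fun t => qq (pre lab' t))) (hs (fun t => qq (pre (pblock P) t))) preC' preD' (prepb (inl v)) (prepb (inr u)).
  rewrite (eq_bigr (fun t => qq (pre (pblock P) t))); last first.
    by move=> t /andP[tC tD]; rewrite preO.
  rewrite -/C -/D.
  set s := (\sum_(i | _) _)%R.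
  set a := qq (C :\ inl v); set b := qq (inl v |: D); set c := qq C; set d := qq D.
  clearbody a b c d s; ring.
have Qle := hmax _ (preim_partitionP lab' setT).
rewrite Qs in Qle.
have mR : (m%:R : rat) != 0%R by rewrite pnatr_eq0 -lt0n.
have hdelta : (qq (C :\ inl v) + qq (inl v |: D) - qq C - qq D =
    ((m%:R + (BC e C)%:R - (BC e D)%:R) / (m%:R)^+2))%R.
  rewrite /qq E1 E2 R1 R2 B1 B2.
  move: (edges_in e C) (edges_in e D) (RC e (C :\ inl v)) (RC e D) (BC e C) (BC e D) => x1 x2 x3 x4 x5 x6.
  rewrite !natrM -[x2.+1]add1n -[x3.+1]add1n -[x4.+1]add1n !natrD.
  move: (m%:R : rat) mR => M MR.
  by field.
have mpos' : (0 < (m%:R : rat))%R by rewrite ltr0n.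
have hBD : (BC e D + BC e (~: D) = m)%N := BC_split D.
case: (ltnP (BC e D) (m + BC e C)) => hlt.
  have hpos : (0 < qq (C :\ inl v) + qq (inl v |: D) - qq C - qq D)%R.
    rewrite hdelta; apply: divr_gt0; last by rewrite exprn_gt0.
    by rewrite -natrD subr_gt0 ltr_nat.
  move: Qle hpos; move: (qq (C :\ inl v) + qq (inl v |: D) - qq C - qq D)%R (bimodularity e P) => x y.
  lra.
have [BDm BnD] : BC e D = m /\ BC e (~: D) = 0%N.
  exact: arith1 hlt hBD.
have hQP : (bimodularity e P <= 0)%R.
  rewrite bimodE (bigD1 D) //= big1 ?addr0.
    rewrite /qq BDm; have := edges_leR D.
    move: (edges_in e D) (RC e D) => x y hxy.
    rewrite natrM; move: (m%:R : rat) mpos' => M MP.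
    rewrite (_ : (x%:R / M - y%:R * M / M ^+ 2 = (x%:R - y%:R) / M)%R); last first.
      by field; rewrite gt_eqF.
    apply: mulr_le0_ge0; first by rewrite subr_le0 ler_nat.
    by rewrite invr_ge0 ltW.
  move=> X /andP[XP nXD].
  have dj : [disjoint X & D] by apply: (trivIsetP tiP).
  rewrite disjoints_subset in dj.
  have hb := BC_mono dj; rewrite BnD leqn0 in hb.
  have he := edges_leB X; rewrite (eqP hb) leqn0 in he.
  by rewrite /qq (eqP he) (eqP hb) muln0 !mul0r subrr.
pose S : {set V} := [set inl v; inr u].
have nS : S != setT.
  apply/negP => /eqP hS; have : inr b0 \in S by rewrite hS inE.
  by rewrite !inE -[inr b0 == inr u :> V]/(b0 == u) (negbTE hb0).
pose labs := fun y : V => if y \in S then S else setT.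
have hQs : bimodularity e (preim_partition labs setT) = (qq S + qq (~: S))%R.
  rewrite sum_lab (bigD1 S) // (bigD1 setT) /=; last by rewrite eq_sym.
  rewrite big1 ?addr0.
    congr (qq _ + qq _)%R; apply/setP => y; rewrite inE /labs.
      by case: ifP => hy; [rewrite eqxx | rewrite eq_sym (negbTE nS)].
    by rewrite in_setC; case: ifP => hy; [rewrite (negbTE nS) | rewrite eqxx].
  move=> t /andP[tS tT]; rewrite -qq0; congr qq; apply/setP => y.
  by rewrite inE in_set0 /labs; case: ifP => _; rewrite eq_sym ?(negbTE tS) ?(negbTE tT).
have eS : edges_in e S = 1%N.
  rewrite /edges_in (_ : [set p : R * B | _] = [set (v, u)]) ?cards1 //.
  apply/setP => -[r b]; rewrite !inE /= xpair_eqE.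
  rewrite -[inl r == inl v :> V]/(r == v) -[inl r == inr u :> V]/false.
  rewrite -[inr b == inr u :> V]/(b == u) orbF.
  case: (eqVneq r v) => [->|] /=; last by rewrite !andbF.
  by rewrite hv; case: (b == u).
have RS : RC e S = 1%N.
  rewrite /RC (eq_bigl (pred1 v)) ?big_pred1_eq // => r; rewrite !inE.
  by rewrite -[inl r == inl v :> V]/(r == v) -[inl r == inr u :> V]/false orbF.
have BS : BC e S = degB e u.
  rewrite /BC (eq_bigl (pred1 u)) ?big_pred1_eq // => b; rewrite !inE.
  by rewrite -[inr b == inl v :> V]/false -[inr b == inr u :> V]/(b == u).
have eT : (m <= edges_in e (~: S) + degB e u)%N.
  rewrite duE /edges_in.
  set A1 := [set p : R * B | [&& e p.1 p.2, _ & _]].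
  set A2 := [set p : R * B | e p.1 p.2 && (p.2 == u)].
  apply: (@leq_trans #|A1 :|: A2|); last by case: (leq_card_setU A1 A2).
  apply: subset_leq_card; apply/subsetP => -[r b]; rewrite !inE /= => hp.
  rewrite hp /=; case: (eqVneq b u) => [_|nb]; first by rewrite orbT.
  have nr : r != v by apply/eqP => hr; move: hp; rewrite hr hv (negbTE nb).
  rewrite -[inl r == inl v :> V]/(r == v) -[inl r == inr u :> V]/false.
  by rewrite -[inr b == inr u :> V]/(b == u) (negbTE nr) (negbTE nb).
have RT := RC_split S; rewrite RS in RT.
have BT := BC_split S; rewrite BS in BT.
have hpos : (0 < qq S + qq (~: S))%R.
  rewrite /qq eS RS BS.
  move: (edges_in e (~: S)) (RC e (~: S)) (BC e (~: S)) (degB e u) eT RT BT du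
    => x y z d hx hy hz hd.
  have hy' : (1 + y%:R = m%:R :> rat)%R by rewrite -hy natrD.
  have hz' : (d%:R + z%:R = m%:R :> rat)%R by rewrite -hz natrD.
  have hx' : (m%:R <= x%:R + d%:R :> rat)%R by rewrite -natrD ler_nat.
  have hd' : (d%:R < m%:R :> rat)%R by rewrite ltr_nat.
  rewrite !natrM.
  move: (m%:R : rat) mpos' hy' hz' hx' hd' => M MP hy' hz' hx' hd'.
  move: (x%:R : rat) (y%:R : rat) (z%:R : rat) (d%:R : rat) hy' hz' hx' hd'
    => X Y Z Dd hy' hz' hx' hd'.
  set L := (X in (0 < X)%R).
  have -> : L = ((M - Dd + M * X - Y * Z) / M ^+ 2)%R by rewrite /L; field; rewrite gt_eqF.
  apply: divr_gt0; last by rewrite exprn_gt0.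
  nra.
have := hmax _ (preim_partitionP labs setT); rewrite hQs.
move: hpos hQP; move: (qq S + qq (~: S))%R (bimodularity e P) => x y; lra.
Qed.

End Gen.


Definition swapV {R B : Type} (x : R + B) : B + R :=
  match x with inl r => inr r | inr b => inl b end.
Lemma swapVK {R B : Type} : cancel (@swapV R B) (@swapV B R).
Proof. by case. Qed.

Section Swap.
Variables (R B : finType) (e : R -> B -> bool).
Local Notation V := (R + B)%type.
Local Notation e' := (fun b r => e r b).

Lemma mem_swap (X : {set V}) y : (swapV y \in swapV @: X) = (y \in X).
Proof. exact: (mem_imset _ _ (can_inj swapVK)). Qed.

Lemma card_swapP (Q : R * B -> bool) :
  #|[set p : B * R | Q (p.2, p.1)]| = #|[set p : R * B | Q p]|.
Proof.
pose swp := fun p : R * B => (p.2, p.1).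
have swpK : cancel swp (fun p : B * R => (p.2, p.1)) by case.
rewrite -(card_imset _ (can_inj swpK)); apply: eq_card => -[b r].
rewrite inE; apply/idP/imsetP => [h|[[r' b'] h [-> ->]]]; last by rewrite inE in h.
by exists (r, b); rewrite ?inE.
Qed.

Lemma nedges_swap : nedges e' = nedges e.
Proof. exact: (card_swapP (fun p => e p.1 p.2)). Qed.

Lemma edges_swap (X : {set V}) : edges_in e' (swapV @: X) = edges_in e X.
Proof.
rewrite /edges_in -(card_swapP (fun p => [&& e p.1 p.2, inl p.1 \in X & inr p.2 \in X])).
apply: eq_card => -[b r]; rewrite !inE /=.
rewrite -[inl b]/(swapV (inr b)) -[inr r]/(swapV (inl r)) !mem_swap.
by case: (e r b); case: (inr b \in X); case: (inl r \in X).
Qed.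

Lemma RC_swap (X : {set V}) : RC e' (swapV @: X) = BC e X.
Proof. by apply: eq_bigl => b; rewrite -[inl b]/(swapV (inr b)) mem_swap. Qed.
Lemma BC_swap (X : {set V}) : BC e' (swapV @: X) = RC e X.
Proof. by apply: eq_bigl => b; rewrite -[inr b]/(swapV (inl b)) mem_swap. Qed.

Lemma bimod_swap (P : {set {set V}}) : bimodularity e' [set (@swapV R B) @: (X : {set R + B}) | X in P] = bimodularity e P.
Proof.
rewrite /bimodularity big_imset; last by move=> X Y _ _; exact: (imset_inj (can_inj (@swapVK R B))).
by apply: eq_bigr => X _; rewrite edges_swap RC_swap BC_swap nedges_swap mulnC.
Qed.

End Swap.

Lemma div_swap (R B : finType) (P : {set {set R + B}}) :
  division P -> division [set (@swapV R B) @: (X : {set R + B}) | X in P].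
Proof.
rewrite /division => hP.
have -> : [set: B + R] = swapV @: [set: R + B].
  apply/setP => y; rewrite inE -[y](@swapVK B R) mem_swap inE //.
by rewrite imset_partition //; apply: can_inj swapVK.
Qed.

Lemma swap_max (R B : finType) (e : R -> B -> bool) (P : {set {set R + B}}) :
  max_division e P -> max_division (fun b r => e r b) [set (@swapV R B) @: (X : {set R + B}) | X in P].
Proof.
move=> [hd hm]; split; first exact: div_swap hd.
move=> P' hP'.
have hP0 : division [set (@swapV B R) @: (X : {set B + R}) | X in P'] by exact: div_swap hP'.
have -> : P' = [set (@swapV R B) @: (X : {set R + B}) | X in [set (@swapV B R) @: (X : {set B + R}) | X in P']].
  rewrite -imset_comp -[LHS]imset_id; apply: eq_imset => X /=.
  rewrite -imset_comp -[LHS]imset_id; apply: eq_imset => x /=; by rewrite swapVK.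
rewrite (bimod_swap e P) (bimod_swap e [set (@swapV B R) @: (X : {set B + R}) | X in P']).
exact: hm.
Qed.

Lemma star_helper (T : finType) (P : {set {set T}}) (c : T) (L : {set T}) :
  partition P setT ->
  (forall x, x \in L -> exists2 C, C \in P & (x \in C) && (c \in C)) ->
  exists2 C, C \in P & c |: L \subset C.
Proof.
move=> hP hL.
have tiP := partition_trivIset hP.
have cov : c \in cover P by rewrite (cover_partition hP) inE.
exists (pblock P c); first exact: pblock_mem.
apply/subsetP => x; rewrite in_setU1 => /orP[/eqP->|xL]; first by rewrite mem_pblock.
have [C CP /andP[xC cC]] := hL x xL.
by rewrite (def_pblock tiP CP cC).
Qed.

Unset Implicit Arguments.

Theorem lemma3 (k b : nat) (A : 'I_(3 * k) -> nat)
    (f g : 'I_k -> 'I_(asum A) -> 'I_(3 * k))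
    (P : {set {set side k (asum A) ((asum A) ^ 2 %/ 7)
                   + side k (asum A) ((asum A) ^ 2 %/ 7)}}) :
  three_partition_instance b A ->
  7 %| (asum A) ^ 2 ->
  valid_assignment A f -> valid_assignment A g ->
  max_division (@GA_edge k (asum A) ((asum A) ^ 2 %/ 7) f g) P ->
  forall i : 'I_(3 * k),
    (exists2 C, C \in P & starX (asum A) ((asum A) ^ 2 %/ 7) i \subset C) /\
    (exists2 C, C \in P & starY (asum A) ((asum A) ^ 2 %/ 7) i \subset C).
Proof.
move=> _ _ _ _ hmax i.
set n := asum A; set s := (n ^ 2 %/ 7)%N.
have hpart : partition P setT by case: hmax.
split.
  apply: star_helper => // x /imsetP[t _ ->].
  apply: (@leaf_lemma _ _ (GA_edge f g) P (leaf i t) (ctr i) (elt i) (elt i) hmax).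
  - by move=> bb; rewrite /leaf /ctr; case: bb => [[[[l j]|i']|[i' t']]|i'] //=; rewrite eq_sym.
  - by rewrite /elt /= eqxx.
  - by [].
have hmax' := swap_max hmax.
apply: star_helper => // x /imsetP[t _ ->].
have hv' : forall r, GA_edge f g r (leaf i t) = (r == ctr i).
  by move=> r; rewrite /leaf /ctr; case: r => [[[[l j]|i']|[i' t']]|i'] //=.
have he0 : GA_edge f g (elt i : side k n s) (elt i : side k n s) by rewrite /elt /= eqxx.
have hb0 : (elt i : side k n s) != ctr i by [].
have [C' C'P /andP[h1 h2]] :=
  @leaf_lemma _ _ (fun bb r => GA_edge f g r bb) _ (leaf i t) (ctr i) (elt i) (elt i) hmax' hv' he0 hb0.
move/imsetP: C'P => [X XP XE]; exists X => //.
rewrite XE in h1 h2.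
move: h1 h2; rewrite -[inl (leaf i t)]/(swapV (inr (leaf i t))) -[inr (ctr i)]/(swapV (inl (ctr i))).
by rewrite !mem_swap => -> ->.
Qed.
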